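(* Let $p$ be an odd prime and $n$ a positive integer with $p^n>3$, let $d=\frac{p^n-3}{2}$ and $F(x)=x^d$ on $\mathrm{GF}(p^n)$. For $c=-1$, ${}_c\Delta_F\le4$.
   Context: For a function $F:\mathrm{GF}(p^n)\to\mathrm{GF}(p^n)$ and $a,b,c\in\mathrm{GF}(p^n)$, let ${}_c\Delta_F(a,b)=\#\{x\in\mathrm{GF}(p^n): F(x+a)-cF(x)=b\}$. The $c$-differential uniformity of $F$ is ${}_c\Delta_F=\max\{{}_c\Delta_F(a,b): a,b\in\mathrm{GF}(p^n),\ \text{and } a\neq 0 \text{ if } c=1\}$. *)

(* Defs.v *)
From HB Require Import structures.
From mathcomp Require Import all_boot all_order all_algebra all_field.
Set Implicit Arguments. Unset Strict Implicit. Unset Printing Implicit Defensive.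
Import GRing.Theory.
Local Open Scope ring_scope.

Definition cDelta (K : finFieldType) (F : K -> K) (c a b : K) : nat :=
  #|[set x : K | F (x + a) - c * F x == b]|.

Definition cDiffUnif (K : finFieldType) (F : K -> K) (c : K) : nat :=
  \max_(ab : K * K | (c != 1) || (ab.1 != 0)) cDelta F c ab.1 ab.2.

(* Main.v *)
Require Import Defs.
From HB Require Import structures.
From mathcomp Require Import all_boot all_order all_algebra all_field.
From mathcomp Require Import ring zify.
Set Implicit Arguments. Unset Strict Implicit. Unset Printing Implicit Defensive.
Import GRing.Theory.
Local Open Scope ring_scope.

Section Gen.
Variable K : fieldType.

Lemma eq_from (u v w : K) : u - v = w -> w = 0 -> u = v.
Proof. by move=> <- /eqP; rewrite subr_eq0 => /eqP. Qed.

Lemma vieta_sum (al be ga y1 y2 : K) : y1 != y2 ->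
  al * y1 ^+ 2 + be * y1 + ga = 0 -> al * y2 ^+ 2 + be * y2 + ga = 0 ->
  al * (y1 + y2) + be = 0.
Proof.
move=> hne h1 h2.
have E : (y1 - y2) * (al * (y1 + y2) + be) =
   (al * y1 ^+ 2 + be * y1 + ga) - (al * y2 ^+ 2 + be * y2 + ga) by ring.
rewrite h1 h2 subrr in E.
move/eqP: E; rewrite mulf_eq0 subr_eq0 (negbTE hne) /= => /eqP //.
Qed.

Lemma vieta_prod (al be ga y1 y2 : K) : y1 != y2 ->
  al * y1 ^+ 2 + be * y1 + ga = 0 -> al * y2 ^+ 2 + be * y2 + ga = 0 ->
  al * (y1 * y2) = ga.
Proof.
move=> hne h1 h2; have hs := vieta_sum hne h1 h2.
apply: (eq_from (w := - (al * y1 ^+ 2 + be * y1 + ga) + y1 * (al * (y1 + y2) + be))).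
  by ring.
by rewrite h1 hs; ring.
Qed.
End Gen.

Section Fin.
Variable K : finFieldType.

Lemma quad_card (al be ga : K) (A : {set K}) : ga != 0 ->
  (forall y, y \in A -> al * y ^+ 2 + be * y + ga = 0) -> (#|A| <= 2)%N.
Proof.
move=> hg hA.
pose P : {poly K} := Poly [:: ga; be; al].
have P0 : P != 0.
  apply/eqP => /(congr1 (fun q : {poly K} => q`_0)).
  by rewrite coef_Poly coef0 /=; apply/eqP.
have sP : (size P <= 3)%N by apply: size_Poly.
have hr : all (root P) (enum A).
  apply/allP => y; rewrite mem_enum => /hA hy.
  by rewrite /root /P horner_Poly /=; apply/eqP; rewrite -[RHS]hy; ring.
have := max_poly_roots P0 hr (enum_uniq _).
rewrite -cardE => h; rewrite -ltnS; exact: leq_trans h sP.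
Qed.

Lemma card_le1 (A : {set K}) : (forall x y, x \in A -> y \in A -> x != y -> False) ->
  (#|A| <= 1)%N.
Proof.
move=> H; rewrite leqNgt; apply/negP => /card_gt1P [x [y [hx hy hxy]]].
exact: H hx hy hxy.
Qed.

Lemma card0_of (A : {set K}) (P : Prop) : (forall y, y \in A -> P) -> ~ P -> #|A| = 0%N.
Proof.
move=> H nP; apply/eqP; rewrite cards_eq0; apply/eqP/setP => y.
by rewrite inE; apply/negbTE/negP => /H.
Qed.

End Fin.
Section Main.
Variables (K : finFieldType) (d : nat).
Hypothesis hd : (0 < d)%N.
Hypothesis hq : (d.+1 * 2 = #|K|.-1)%N.
Hypothesis h2 : (2%:R : K) != 0.

Definition chi (x : K) := x ^+ d.+1.

Lemma chi0 : chi 0 = 0. Proof. by rewrite /chi expr0n. Qed.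
Lemma chi1 : chi 1 = 1. Proof. by rewrite /chi expr1n. Qed.
Lemma chiM x y : chi (x * y) = chi x * chi y. Proof. by rewrite /chi exprMn. Qed.

Lemma chi_sq x : x != 0 -> chi x ^+ 2 = 1.
Proof.
move=> hx; rewrite /chi -exprM hq.
have hK : (0 < #|K|)%N by apply/card_gt0P; exists 0.
have := expf_card x; rewrite -(prednK hK) exprS => E.
apply: (mulfI hx); by rewrite mulr1 E.
Qed.

Lemma chi_pm x : x != 0 -> chi x = 1 \/ chi x = -1.
Proof. by move/chi_sq/eqP; rewrite sqrf_eq1 => /orP[]/eqP; auto. Qed.

Lemma m1_neq1 : (-1 : K) != 1.
Proof.
apply/eqP => h; move: h2; have -> : (2%:R : K) = 1 - (-1) by ring.
by rewrite h subrr eqxx.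
Qed.
Lemma one_neqm1 : (1 : K) != -1. Proof. by rewrite eq_sym m1_neq1. Qed.

Lemma pow_chi x : x ^+ d * x = chi x. Proof. by rewrite /chi exprSr. Qed.

Definition G (y : K) := (y + 1) ^+ d + y ^+ d.

Lemma G_eq y b : G y = b ->
  chi (y + 1) * y + chi y * (y + 1) = b * y * (y + 1).
Proof. move=> <-; rewrite /G -!pow_chi; ring. Qed.

Definition S b := [set y | G y == b].
Definition SA b := [set y in S b | (chi y == 1) && (chi (y + 1) == 1)].
Definition SB b := [set y in S b | (chi y == -1) && (chi (y + 1) == -1)].
Definition SC b := [set y in S b | (chi y == -1) && (chi (y + 1) == 1)].
Definition SD b := [set y in S b | (chi y == 1) && (chi (y + 1) == -1)].
Definition S0 b := [set y in S b | y == 0].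
Definition Sm b := [set y in S b | y == -1].

Lemma chi_ne0 x c : chi x = c -> c != 0 -> x != 0.
Proof. by move=> <-; apply: contraNneq => ->; rewrite chi0. Qed.

Ltac unpack h := move: h; rewrite !inE => /andP[/eqP hG /andP[/eqP hc /eqP hc1]].

Lemma eqA b y : y \in SA b -> b * y ^+ 2 + (b - 2%:R) * y + (-1) = 0.
Proof.
move=> h; unpack h; have := G_eq hG; rewrite hc hc1 => E.
apply: (eq_from (u := _ + _) (w := (b * y * (y+1)) - (1 * y + 1 * (y + 1)))); first by ring.
by rewrite E subrr.
Qed.

Lemma eqB b y : y \in SB b -> b * y ^+ 2 + (b + 2%:R) * y + 1 = 0.
Proof.
move=> h; unpack h; have := G_eq hG; rewrite hc hc1 => E.
apply: (eq_from (u := _ + _) (w := (b * y * (y+1)) - ((-1) * y + (-1) * (y + 1)))); first by ring.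
by rewrite E subrr.
Qed.

Lemma eqC b y : y \in SC b -> b * y ^+ 2 + b * y + 1 = 0.
Proof.
move=> h; unpack h; have := G_eq hG; rewrite hc hc1 => E.
apply: (eq_from (u := _ + _) (w := (b * y * (y+1)) - (1 * y + (-1) * (y + 1)))); first by ring.
by rewrite E subrr.
Qed.

Lemma eqD b y : y \in SD b -> b * y ^+ 2 + b * y + (-1) = 0.
Proof.
move=> h; unpack h; have := G_eq hG; rewrite hc hc1 => E.
apply: (eq_from (u := _ + _) (w := (b * y * (y+1)) - ((-1) * y + 1 * (y + 1)))); first by ring.
by rewrite E subrr.
Qed.

Lemma SC_cond b y : y \in SC b -> chi b = - chi (-1).
Proof.
move=> h; have := h; unpack h => h.
have E : b * y * (y + 1) = -1.
  by rewrite -(G_eq hG) hc hc1; ring.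
have := congr1 chi E; rewrite !chiM hc hc1 => <-; ring.
Qed.

Lemma SD_cond b y : y \in SD b -> chi b = -1.
Proof.
move=> h; have := h; unpack h => h.
have E : b * y * (y + 1) = 1.
  by rewrite -(G_eq hG) hc hc1; ring.
have := congr1 chi E; rewrite !chiM hc hc1 chi1 => E2.
by rewrite -E2; ring.
Qed.

Lemma S0_cond b y : y \in S0 b -> b = 1.
Proof.
rewrite !inE => /andP[/eqP <- /eqP ->].
by rewrite /G add0r expr1n expr0n eqn0Ngt hd addr0.
Qed.

Lemma Sm_cond b y : y \in Sm b -> b = - chi (-1).
Proof.
rewrite !inE => /andP[/eqP <- /eqP ->].
rewrite /G addNr expr0n eqn0Ngt hd add0r /chi exprSr; ring.
Qed.

Lemma SA_le b : (#|SA b| <= 2)%N.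
Proof. by apply: (quad_card (al := b) (be := b - 2%:R) _ (@eqA b)); rewrite oppr_eq0 oner_eq0. Qed.
Lemma SB_le b : (#|SB b| <= 2)%N.
Proof. by apply: (quad_card (al := b) (be := b + 2%:R) _ (@eqB b)); rewrite oner_eq0. Qed.
Lemma SC_le b : (#|SC b| <= 2)%N.
Proof. by apply: (quad_card (al := b) (be := b) _ (@eqC b)); rewrite oner_eq0. Qed.
Lemma SD_le b : (#|SD b| <= 2)%N.
Proof. by apply: (quad_card (al := b) (be := b) _ (@eqD b)); rewrite oppr_eq0 oner_eq0. Qed.
Lemma S0_le b : (#|S0 b| <= 1)%N.
Proof. apply: card_le1 => x y; rewrite !inE => /andP[_ /eqP->] /andP[_ /eqP->]; by rewrite eqxx. Qed.
Lemma Sm_le b : (#|Sm b| <= 1)%N.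
Proof. apply: card_le1 => x y; rewrite !inE => /andP[_ /eqP->] /andP[_ /eqP->]; by rewrite eqxx. Qed.


Lemma b_nz_C b y : y \in SC b -> b != 0.
Proof. move=> h; apply/eqP => b0; have := eqC h; rewrite b0; apply/eqP.
by rewrite !mul0r !add0r oner_eq0. Qed.
Lemma b_nz_D b y : y \in SD b -> b != 0.
Proof. move=> h; apply/eqP => b0; have := eqD h; rewrite b0; apply/eqP.
by rewrite !mul0r !add0r oppr_eq0 oner_eq0. Qed.

Lemma sum_pair (b y1 y2 : K) : b != 0 -> b * (y1 + y2) + b = 0 -> y2 = (-1) * (y1 + 1).
Proof.
move=> hb hs; apply: (eq_from (w := y1 + y2 + 1)); first by ring.
have : b * (y1 + y2 + 1) = 0 by rewrite -hs; ring.
by move/eqP; rewrite mulf_eq0 (negbTE hb) => /eqP.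
Qed.

Lemma SC_le1 b : chi (-1) = 1 -> (#|SC b| <= 1)%N.
Proof.
move=> he; apply: card_le1 => y1 y2 h1 h2' hne.
have hb := b_nz_C h1.
have := sum_pair hb (vieta_sum hne (eqC h1) (eqC h2')) => E.
move: h1 h2'; rewrite !inE => /andP[_ /andP[_ /eqP c1]] /andP[_ /andP[/eqP c2 _]].
move: c2; rewrite E chiM he c1 mul1r => /eqP; by rewrite (negbTE one_neqm1).
Qed.

Lemma SD_le1 b : chi (-1) = 1 -> (#|SD b| <= 1)%N.
Proof.
move=> he; apply: card_le1 => y1 y2 h1 h2' hne.
have hb := b_nz_D h1.
have := sum_pair hb (vieta_sum hne (eqD h1) (eqD h2')) => E.
move: h1 h2'; rewrite !inE => /andP[_ /andP[_ /eqP c1]] /andP[_ /andP[/eqP c2 _]].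
move: c2; rewrite E chiM he c1 mul1r => /eqP; by rewrite (negbTE m1_neq1).
Qed.

Lemma SA_le1 b : chi (-1) = -1 -> (#|SA b| <= 1)%N.
Proof.
move=> he; apply: card_le1 => y1 y2 h1 h2' hne.
have hp := vieta_prod hne (eqA h1) (eqA h2').
have hs := vieta_sum hne (eqA h1) (eqA h2').
have E2 : b * ((y1 + 1) * (y2 + 1)) = 1.
  apply: (eq_from (w := (b * (y1 * y2) - (-1)) + (b * (y1 + y2) + (b - 2%:R)))); first by ring.
  by rewrite hp hs; ring.
move: h1 h2'; rewrite !inE => /andP[_ /andP[/eqP a1 /eqP c1]] /andP[_ /andP[/eqP a2 /eqP c2]].
have := congr1 chi hp; rewrite !chiM a1 a2 he !mulr1 => cb.
have := congr1 chi E2; rewrite !chiM c1 c2 chi1 cb !mulr1 => /eqP.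
by rewrite (negbTE m1_neq1).
Qed.

Lemma SB_le1 b : chi (-1) = -1 -> (#|SB b| <= 1)%N.
Proof.
move=> he; apply: card_le1 => y1 y2 h1 h2' hne.
have hp := vieta_prod hne (eqB h1) (eqB h2').
have hs := vieta_sum hne (eqB h1) (eqB h2').
have E2 : b * ((y1 + 1) * (y2 + 1)) = -1.
  apply: (eq_from (w := (b * (y1 * y2) - 1) + (b * (y1 + y2) + (b + 2%:R)))); first by ring.
  by rewrite hp hs; ring.
move: h1 h2'; rewrite !inE => /andP[_ /andP[/eqP a1 /eqP c1]] /andP[_ /andP[/eqP a2 /eqP c2]].
have := congr1 chi hp; rewrite !chiM a1 a2 chi1 mulrNN !mulr1 => cb.
have := congr1 chi E2; rewrite !chiM c1 c2 he cb mulrNN !mulr1 => /eqP.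
by rewrite (negbTE one_neqm1).
Qed.

Lemma SAB_le b : chi (-1) = 1 -> (#|SA b| + #|SB b| <= 2)%N.
Proof.
move=> he.
pose f := fun y : K => - (y + 1).
have finj : injective f by apply: (can_inj (g := f)) => y; rewrite /f; ring.
rewrite -(card_imset (SB b) finj) -cardsUI.
have -> : SA b :&: (f @: SB b) = set0.
  apply/setP => z; rewrite !inE; apply/negbTE/negP => /andP[hz /imsetP [y hy zE]]; subst z.
  move: hz hy; rewrite !inE => /andP[_ /andP[/eqP c1 _]] /andP[_ /andP[_ /eqP c2]].
  move: c1; rewrite /f -(mulN1r (y + 1)) chiM he c2 mul1r => /eqP; by rewrite (negbTE m1_neq1).
rewrite cards0 addn0.
apply: (quad_card (al := b) (be := b - 2%:R) (ga := -1)); first by rewrite oppr_eq0 oner_eq0.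
move=> z; rewrite inE => /orP[/eqA //|/imsetP [y hy ->]].
rewrite /f -[RHS](eqB hy); ring.
Qed.

Lemma SC_one y : y \in SC 1 -> False.
Proof.
move=> h; have E := eqC h.
move: h; rewrite !inE => /andP[_ /andP[/eqP c1 _]].
have y0 : y != 0 by apply: (chi_ne0 c1); rewrite oppr_eq0 oner_eq0.
have y3 : y = y ^+ 2 * y ^+ 2.
  apply: (eq_from (w := - y * (y - 1) * (1 * y ^+ 2 + 1 * y + 1))); first by ring.
  by rewrite E mulr0.
move: c1; rewrite y3 chiM -expr2 chi_sq ?expf_neq0 // => /eqP.
by rewrite (negbTE one_neqm1).
Qed.

Lemma S_cover b : S b \subset S0 b :|: Sm b :|: SA b :|: SB b :|: SC b :|: SD b.
Proof.
apply/subsetP => y hy.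
have hy' := hy; rewrite inE in hy'.
case: (eqVneq y 0) => [y0|y0]; first by rewrite !inE hy' y0 eqxx.
case: (eqVneq y (-1)) => [y1|y1]; first by rewrite !inE hy' y1 eqxx !orbT.
have y1' : y + 1 != 0 by rewrite addr_eq0.
have m := negbTE m1_neq1; have o := negbTE one_neqm1.
rewrite !inE hy' /=.
by case: (chi_pm y0) => ->; case: (chi_pm y1') => ->;
  rewrite ?eqxx ?m ?o /= ?orbT.
Qed.

Lemma S_le4 b : (#|S b| <= 4)%N.
Proof.
have U : (#|S b| <= #|S0 b| + #|Sm b| + #|SA b| + #|SB b| + #|SC b| + #|SD b|)%N.
  apply: leq_trans (subset_leq_card (S_cover b)) _.
  do 5 (apply: leq_trans (leq_card_setU _ _) _; rewrite leq_add2r).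
  done.
have a := SA_le b; have bb := SB_le b; have c := SC_le b; have dd := SD_le b.
have z := S0_le b; have m := Sm_le b.
have mo := negbTE m1_neq1; have om := negbTE one_neqm1.
case: (chi_pm (x := -1)); first by rewrite oppr_eq0 oner_eq0.
- move=> he.
  have ab := SAB_le b he; have c1 := SC_le1 b he; have d1 := SD_le1 b he.
  case: (eqVneq (chi b) (-1)) => hb.
  + have z0 : #|S0 b| = 0%N.
      apply: (card0_of (@S0_cond b)) => b1; move: hb; rewrite b1 chi1 => /eqP; by rewrite om.
    have m0 : #|Sm b| = 0%N.
      apply: (card0_of (@Sm_cond b)) => b1; move: hb; rewrite b1 he he => /eqP.
      by rewrite om.
    lia.
  + have c0 : #|SC b| = 0%N.
      apply: (card0_of (@SC_cond b)) => e; move: hb; by rewrite e he eqxx.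
    have d0 : #|SD b| = 0%N.
      apply: (card0_of (@SD_cond b)) => e; move: hb; by rewrite e eqxx.
    have zm : (#|S0 b| + #|Sm b| <= 1)%N.
      case: (eqVneq b 1) => b1.
        have -> : #|Sm b| = 0%N.
          apply: (card0_of (@Sm_cond b)) => e; move: e; rewrite b1 he => /eqP; by rewrite om.
        lia.
      have -> : #|S0 b| = 0%N by apply: (card0_of (@S0_cond b)) => e; move: b1; rewrite e eqxx.
      lia.
    lia.
- move=> he.
  have a1 := SA_le1 b he; have b1 := SB_le1 b he.
  case: (eqVneq (chi b) (-1)) => hb.
  + have c0 : #|SC b| = 0%N.
      apply: (card0_of (@SC_cond b)) => e; move: hb; rewrite e he opprK => /eqP; by rewrite om.
    have z0 : #|S0 b| = 0%N.
      apply: (card0_of (@S0_cond b)) => e; move: hb; rewrite e chi1 => /eqP; by rewrite om.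
    have m0 : #|Sm b| = 0%N.
      apply: (card0_of (@Sm_cond b)) => e; move: hb; rewrite e he opprK chi1 => /eqP; by rewrite om.
    lia.
  + have d0 : #|SD b| = 0%N.
      apply: (card0_of (@SD_cond b)) => e; move: hb; by rewrite e eqxx.
    case: (eqVneq b 1) => e1.
      have c0 : #|SC b| = 0%N by apply: (card0_of (P := False)) => // y; rewrite e1 => /SC_one.
      lia.
    have z0 : #|S0 b| = 0%N by apply: (card0_of (@S0_cond b)) => e; move: e1; rewrite e eqxx.
    have m0 : #|Sm b| = 0%N.
      by apply: (card0_of (@Sm_cond b)) => e; move: e1; rewrite e he opprK eqxx.
    lia.
Qed.
End Main.

Lemma a0_le (K : finFieldType) (d : nat) (hd : (0 < d)%N)
  (hq : (d.+1 * 2 = #|K|.-1)%N) (h2 : (2%:R : K) != 0) (b : K) :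
  (#|[set x : K | ((x + 0) ^+ d - (-1) * x ^+ d == b)%R]| <= 2)%N.
Proof.
case: (eqVneq b 0) => [b0|b0].
  apply: (@leq_trans #|[set (0:K)]|); last by rewrite cards1.
  apply: subset_leq_card; apply/subsetP => x; rewrite !inE b0 addr0 mulN1r opprK.
  rewrite -mulr2n -mulr_natr mulf_eq0 (negbTE h2) orbF expf_eq0 hd //.
apply: (quad_card (al := b ^+ 2) (be := 0) (ga := - 4%:R)).
  rewrite oppr_eq0 (_ : 4%:R = (2%:R : K) * 2%:R); last by ring.
  by rewrite mulf_neq0.
move=> x; rewrite inE addr0 mulN1r opprK => /eqP E.
have x0 : x != 0.
  apply/eqP => x0; move: E; rewrite x0 expr0n eqn0Ngt hd addr0 => E.
  by move: b0; rewrite -E eqxx.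
apply: (eq_from (w := 4%:R * ((x ^+ d * x) ^+ 2 - 1))).
  by rewrite -E; ring.
by rewrite (pow_chi d x) (chi_sq hq x0) subrr mulr0.
Qed.

Theorem theorem8 (p n : nat) (K : finFieldType)
  (hp : prime p) (hodd : odd p) (hn : (0 < n)%N)
  (hchar : p \in [pchar K]) (hcard : #|K| = (p ^ n)%N)
  (hgt : (3 < p ^ n)%N) :
  (cDiffUnif (fun x : K => x ^+ ((p ^ n - 3) %/ 2)) (-1 : K)%R <= 4)%N.
Proof.
have hoq : odd (p ^ n) by rewrite oddX hodd orbT.
have hh := odd_double_half (p ^ n).
move: hoq hh; set q := (p ^ n)%N => hoq hh.
rewrite hoq in hh.
set k := q./2 in hh.
have hd : (0 < (q - 3) %/ 2)%N.
  rewrite -double_gt0 in hgt *; rewrite -/k in hh.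
  move: hh hgt; rewrite -!muln2; lia.
have hq : (((q - 3) %/ 2).+1 * 2 = #|K|.-1)%N.
  rewrite hcard; move: hh; rewrite -!muln2 => hh; lia.
have h2 : (2%:R : K) != 0.
  rewrite -(dvdn_pcharf hchar); apply/negP => /(dvdn_leq (isT : (0 < 2)%N)) hp2.
  have hp1 := prime_gt1 hp.
  have : p = 2%N by lia.
  by move=> e; move: hodd; rewrite e.
set d := ((q - 3) %/ 2)%N in hd hq *.
apply/bigmax_leqP => [[a b]] _ /=; rewrite /cDelta.
case: (eqVneq a 0) => [->|a0]; first exact: leq_trans (a0_le hd hq h2 b) _.
apply: leq_trans (S_le4 hd hq h2 (b / a ^+ d)).
apply: leq_trans (leq_imset_card (fun y => a * y) (S d (b / a ^+ d))).
apply: subset_leq_card; apply/subsetP => x; rewrite inE => /eqP E.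
apply/imsetP; exists (x / a); last by rewrite mulrC divfK.
rewrite inE /G; apply/eqP; rewrite -E.
have -> : x / a + 1 = (x + a) / a by rewrite mulrDl divff.
by rewrite !expr_div_n mulN1r opprK mulrDl.
Qed.
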